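(* Let $N\ge\kappa\ge1$ be integers and let $\mathbf a_1,\dots,\mathbf a_N\in\mathbb R^{\kappa}$ be such that every collection of at most $\kappa$ of them is linearly independent. Let $\mathbf A$ be the block matrix $\mathbf A=[\mathbf A_{m,n}]_{m,n=1}^N\in\mathbb R^{N\kappa\times(N\kappa-\kappa(\kappa-1)/2)}$, where $\mathbf A_{m,n}\in\mathbb R^{\kappa\times\min\{\kappa,N-n+1\}}$ has $q$-th column ($1\le q\le\min\{\kappa,N-n+1\}$) $$\mathbf A_{m,n}(:,q)=\begin{cases}\mathbf a_{q+n-1}, & m=n,\\ \mathbf a_n, & m=q+n-1\ (\text{and } m\ne n),\\ \mathbf 0, & \text{otherwise}.\end{cases}$$ Then $\operatorname{rank}(\mathbf A)=N\kappa-\frac{\kappa(\kappa-1)}{2}$.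
   Context: $\mathbf A$ is the coefficient matrix of the linear system in the variables $B_{n,m}$, $n\le m\le \min\{n+\kappa-1,N\}$, obtained by writing $\mathbf B\mathbf M=\boldsymbol\Gamma$ row by row for a real symmetric band matrix $\mathbf B$ of band width $\kappa-1$, where $\mathbf M$ has rows $\mathbf a_n^T$; the column of $\mathbf A$ indexed by block $n$ and position $q$ corresponds to the variable $B_{n,n+q-1}$. *)

(* Defs.v *)
From HB Require Import structures.
From mathcomp Require Import all_boot all_order all_algebra.
From mathcomp Require Import reals.
Set Implicit Arguments. Unset Strict Implicit. Unset Printing Implicit Defensive.
Import Order.TTheory GRing.Theory Num.Theory.
Local Open Scope ring_scope.

(* 0-based indexing: blocks m, n in 'I_N (paper: m+1, n+1), positions
   q in 'I_kappa (paper: q+1).  A column of block n at position q exists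
   iff q < min(kappa, N - n), i.e. n + q < N. *)

Definition rowT (N kappa : nat) := ('I_N * 'I_kappa)%type.

Definition colT (N kappa : nat) :=
  {p : 'I_N * 'I_kappa | (p.2 + p.1 < N)%N}.

(* The index n + q (paper: q + n - 1) of a column, as an element of 'I_N. *)
Definition col_shift (N kappa : nat) (c : colT N kappa) : 'I_N :=
  Ordinal (valP c).

Definition Aentry (R : nzRingType) (N kappa : nat) (a : 'I_N -> 'rV[R]_kappa)
  (r : rowT N kappa) (c : colT N kappa) : R :=
  let m := r.1 in let i := r.2 in let n := (val c).1 in
  if m == n then a (col_shift c) 0 i
  else if m == col_shift c then a n 0 i
  else 0.

(* The matrix A (rows and columns enumerated via the finite index types;
   reordering rows/columns does not affect the rank). *)
Definition Amat (R : nzRingType) (N kappa : nat) (a : 'I_N -> 'rV[R]_kappa) :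
  'M[R]_(#|{: rowT N kappa}|, #|{: colT N kappa}|) :=
  \matrix_(r, c) Aentry a (enum_val r) (enum_val c).

Definition lin_indep (R : fieldType) (N kappa : nat) (a : 'I_N -> 'rV[R]_kappa)
  (S : {set 'I_N}) : bool :=
  row_free (\matrix_(k < #|S|) a (enum_val k)).

(* Main.v *)
Require Import Defs.
From HB Require Import structures.
From mathcomp Require Import all_boot all_order all_algebra.
From mathcomp Require Import reals zify.
Import Order.TTheory GRing.Theory Num.Theory.
Local Open Scope ring_scope.


Lemma indepP (R : fieldType) (N kappa : nat) (a : 'I_N -> 'rV[R]_kappa)
  (S : {set 'I_N}) (y : 'I_N -> R) :
  lin_indep a S -> \sum_(j in S) y j *: a j = 0 -> forall j, j \in S -> y j = 0.
Proof.
move=> Hi Hs j jS.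
set M := \matrix_(k < #|S|) a (enum_val k).
set w := \row_(k < #|S|) y (enum_val k).
have : w *m M = 0.
  rewrite mulmx_sum_row; rewrite -[RHS]Hs (big_enum_val (fun j => y j *: a j)) /=.
  by apply: eq_bigr => k _; rewrite rowK mxE.
move/eqP; rewrite mulmx_free_eq0 // => /eqP/rowP/(_ (enum_rank_in jS j)).
by rewrite !mxE enum_rankK_in.
Qed.

Lemma colT_eq N kappa (c1 c2 : colT N kappa) :
  (val c1).1 = (val c2).1 -> ((val c1).2 = (val c2).2 :> nat) -> c1 = c2.
Proof.
move: c1 c2 => [[n1 q1] h1] [[n2 q2] h2] /= e1 /val_inj e2.
by apply: val_inj => /=; rewrite e1 e2.
Qed.

Lemma main (R : fieldType) (N kappa : nat) (a : 'I_N -> 'rV[R]_kappa)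
  (x : colT N kappa -> R) :
  (forall S : {set 'I_N}, (#|S| <= kappa)%N -> lin_indep a S) ->
  (forall (m : 'I_N) (i : 'I_kappa), \sum_(c : colT N kappa) x c * Aentry a (m, i) c = 0) ->
  forall c, x c = 0.
Proof.
move=> Hind Hrow.
have key : forall m : 'I_N,
    (forall m' : 'I_N, (m' < m)%N -> forall c : colT N kappa, (val c).1 = m' -> x c = 0) ->
    forall c : colT N kappa, (val c).1 = m -> x c = 0.
  move=> m IH.
  pose P := fun c : colT N kappa => (val c).1 == m.
  set W := \sum_(c | P c) x c *: a (col_shift c).
  have W0 : W = 0.
    apply/rowP => i; rewrite summxE mxE -[RHS](Hrow m i) [RHS](bigID P) /=.
    rewrite [X in _ = _ + X]big1 ?addr0; last first.
      move=> c; rewrite /P => Pc; rewrite /Aentry /= eq_sym (negbTE Pc).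
      case: eqP => [em|]; last by rewrite mulr0.
      rewrite (IH (val c).1) ?mul0r //.
      move: Pc; rewrite em -(inj_eq val_inj) /=; lia.
    apply: eq_bigr => c; rewrite /P => Pc; rewrite mxE /Aentry /= eq_sym Pc.
    done.
  set S := (@col_shift N kappa) @: [set c | P c].
  have cardS : (#|S| <= kappa)%N.
    apply: (leq_trans (leq_imset_card _ _)).
    rewrite -(@card_in_imset _ _ (fun c : colT N kappa => (val c).2)); last first.
      move=> c1 c2; rewrite !inE => /eqP e1 /eqP e2 e3; apply: colT_eq; first by rewrite e1 e2.
      by rewrite e3.
    by rewrite -[X in (_ <= X)%N]card_ord max_card.
  pose y := fun j : 'I_N => \sum_(c | P c && (col_shift c == j)) x c.
  have Hy : \sum_(j in S) y j *: a j = 0.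
    rewrite -[RHS]W0 /W (partition_big (@col_shift N kappa) (mem S)) /=; last first.
      by move=> c Pc; apply: imset_f; rewrite inE.
    apply: eq_bigr => j _; rewrite scaler_suml; apply: eq_bigr => c /andP [_ /eqP ->].
    done.
  move=> c0 ec0.
  have Pc0 : P c0 by rewrite /P ec0.
  have := @indepP _ _ _ _ _ _ (Hind _ cardS) Hy (@col_shift N kappa c0).
  rewrite imset_f ?inE // => /(_ isT).
  rewrite /y (big_pred1 c0) // => c.
  apply/andP/eqP => [[/eqP e1 /eqP e2]|->]; last by rewrite Pc0 eqxx.
  apply: colT_eq; first by rewrite e1 ec0.
  have := congr1 (@nat_of_ord N) e2; rewrite /= e1 -ec0 /=; lia.
have strong : forall n (m : 'I_N), (m < n)%N -> forall c : colT N kappa, (val c).1 = m -> x c = 0.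
  elim=> [//|n IHn] m; rewrite ltnS leq_eqVlt => /orP [/eqP em|lt]; last exact: IHn.
  apply: key => m' lt'; apply: IHn; lia.
move=> c; exact: (strong (val c).1.+1 (val c).1).
Qed.
Section CardC.
Local Open Scope nat_scope.
Lemma card_colT N kappa : (kappa <= N)%N ->
  #|{: colT N kappa}| = (N * kappa - kappa * (kappa - 1) %/ 2)%N.
Proof.
move=> kN.
rewrite card_sig -sum1_card.
rewrite (eq_bigl (fun p : 'I_N * 'I_kappa => (p.1 \in 'I_N) && (p.2 \in [pred j : 'I_kappa | j + p.1 < N]))) //.
rewrite -(pair_big_dep (fun i : 'I_N => i \in 'I_N) (fun i (j : 'I_kappa) => j + i < N) (fun _ _ => 1)) /=.
rewrite (exchange_big_dep predT) //=.
have inner : forall j : 'I_kappa, \sum_(i < N | j + i < N) 1 = N - j.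
  move=> j; rewrite (eq_bigl (fun i : 'I_N => i < N - j)); last by move=> i; lia.
  by rewrite -[RHS]card_ord -sum1_card (big_ord_widen N (fun=> 1%N)) ?leq_subr.
rewrite (eq_bigr (fun j : 'I_kappa => N - j)) //.
have e1 : \sum_(j < kappa) (N - j) + \sum_(j < kappa) (j : nat) = N * kappa.
  rewrite -big_split /= (eq_bigr (fun _ => N)); last by move=> j _; have := ltn_ord j; lia.
  by rewrite sum_nat_const card_ord mulnC.
have e2 : \sum_(j < kappa) (j : nat) = (kappa * (kappa - 1)) %/ 2.
  by rewrite -(big_mkord xpredT (fun j => j)) bin2_sum bin2 divn2 subn1.
rewrite -e2 -e1 addnK. done.
Qed.
End CardC.


Theorem lemma2 (R : realType) (N kappa : nat) (a : 'I_N -> 'rV[R]_kappa) :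
  (1 <= kappa)%N -> (kappa <= N)%N ->
  (forall S : {set 'I_N}, (#|S| <= kappa)%N -> lin_indep a S) ->
  \rank (Amat a) = (N * kappa - kappa * (kappa - 1) %/ 2)%N.
Proof.
move=> k1 kN Hind.
rewrite -card_colT // -mxrank_tr; apply/eqP.
change (row_free (Amat a)^T).
apply: inj_row_free => v Hv.
pose x := fun c : colT N kappa => (v 0 (enum_rank c) : R).
have Hrow : forall (m : 'I_N) (i : 'I_kappa),
    \sum_(c : colT N kappa) x c * Aentry a (m, i) c = 0.
  move=> m i.
  move/rowP/(_ (enum_rank ((m, i) : rowT N kappa))): Hv.
  rewrite !mxE => H; rewrite -[RHS]H.
  rewrite (reindex (@enum_rank _)) /=; last exact: onW_bij (@enum_rank_bij _).
  apply: eq_bigr => c _; rewrite !mxE !enum_rankK.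
  done.
have x0 := @main _ _ _ _ _ Hind Hrow.
apply/rowP => k; rewrite !mxE.
by have := x0 (enum_val k); rewrite /x enum_valK.
Qed.
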